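(* Let $a=\sum_{t=0}^7a_te_t\in C\ell_{1,2}$. Then its Moore–Penrose inverse is $$a^+=\begin{cases}0, & \text{if } a=0;\\[2pt] \dfrac{N(a)-2T(a)e_7}{P(a)}\,\bar a, & \text{if } P(a)\neq 0;\\[6pt] \dfrac{a'}{4(a_0^2+a_2^2+a_4^2+a_6^2)}, & \text{if } a\neq 0 \text{ and } P(a)=0.\end{cases}$$
   Context: $C\ell_{1,2}$ is the real Clifford algebra generated by $i_1,i_2,i_3$ with $i_1^2=1$, $i_2^2=i_3^2=-1$ and $i_ti_m=-i_mi_t$ for $t\neq m$, with real basis $e_0=1$, $e_1=i_1$, $e_2=i_2$, $e_3=i_1i_2$, $e_4=i_3$, $e_5=i_1i_3$, $e_6=i_2i_3$, $e_7=i_1i_2i_3$. For $a=\sum_{t=0}^7 a_te_t$ ($a_t\in\mathbb{R}$) define: the conjugate $\bar a=a_0-a_1e_1-a_2e_2-a_3e_3-a_4e_4-a_5e_5-a_6e_6+a_7e_7$; the prime $a'=a_0+a_1e_1-a_2e_2+a_3e_3-a_4e_4+a_5e_5-a_6e_6-a_7e_7$; $N(a)=a_0^2-a_1^2+a_2^2-a_3^2+a_4^2-a_5^2+a_6^2-a_7^2$; $T(a)=a_0a_7+a_2a_5-a_1a_6-a_3a_4$; $P(a)=N(a)^2+4T(a)^2$. For every $a\in C\ell_{1,2}$ there is a unique $x\in C\ell_{1,2}$ with $axa=a$, $xax=x$, $(ax)'=ax$, $(xa)'=xa$; it is called the Moore–Penrose inverse of $a$ and denoted $a^+$. *)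

(* Defs.v *)
From HB Require Import structures.
From mathcomp Require Import all_boot all_order all_algebra.
Set Implicit Arguments. Unset Strict Implicit. Unset Printing Implicit Defensive.
Import Order.TTheory GRing.Theory Num.Theory.
Local Open Scope ring_scope.

(* Basis index t in 'I_8, written in binary t = b0 + 2 b1 + 4 b2,
   stands for e_t = i1^b0 i2^b1 i3^b2 :
   e0=1, e1=i1, e2=i2, e3=i1i2, e4=i3, e5=i1i3, e6=i2i3, e7=i1i2i3. *)
Definition bitn (n j : nat) : bool := odd (n %/ 2 ^ j).

(* index of the blade e_s e_t (symmetric difference of generator sets) *)
Definition xorn3 (s t : nat) : nat := (\sum_(j < 3) (bitn s j != bitn t j) * 2 ^ j)%N.

(* number of transpositions needed to sort e_s e_t *)
Definition swapsn (s t : nat) : nat :=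
  (\sum_(j < 3) \sum_(i < 3) ((j < i) && bitn t j && bitn s i))%N.

(* common generators squaring to -1 : i2 (bit 1) and i3 (bit 2); i1^2 = 1 *)
Definition negsqn (s t : nat) : nat :=
  ((bitn s 1 && bitn t 1) + (bitn s 2 && bitn t 2))%N.

Notation cl R := {ffun 'I_8 -> R}.

Section Cl12.
Variable R : realFieldType.

Definition clzero : cl R := [ffun => 0].
Definition cladd (a b : cl R) : cl R := [ffun i => a i + b i].
Definition clopp (a : cl R) : cl R := [ffun i => - a i].
Definition clscale (k : R) (a : cl R) : cl R := [ffun i => k * a i].

Definition clc (a : cl R) (k : nat) : R := a (inord k).

Definition ebase (k : nat) : cl R := [ffun i : 'I_8 => ((i : nat) == k)%:R].

Definition clmul (a b : cl R) : cl R :=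
  [ffun k : 'I_8 => \sum_(s < 8) \sum_(t < 8)
     (if xorn3 s t == k then (-1) ^+ (swapsn s t + negsqn s t) * a s * b t
      else 0)].

Definition clbar (a : cl R) : cl R :=
  [ffun i : 'I_8 => (if ((i : nat) == 0%N) || ((i : nat) == 7%N) then 1 else -1) * a i].

Definition clprime (a : cl R) : cl R :=
  [ffun i : 'I_8 => (if (i : nat) \in [:: 0; 1; 3; 5]%N then 1 else -1) * a i].

Definition clN (a : cl R) : R :=
  clc a 0 ^+ 2 - clc a 1 ^+ 2 + clc a 2 ^+ 2 - clc a 3 ^+ 2
  + clc a 4 ^+ 2 - clc a 5 ^+ 2 + clc a 6 ^+ 2 - clc a 7 ^+ 2.

Definition clT (a : cl R) : R :=
  clc a 0 * clc a 7 + clc a 2 * clc a 5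
  - clc a 1 * clc a 6 - clc a 3 * clc a 4.

Definition clP (a : cl R) : R := clN a ^+ 2 + 4 * clT a ^+ 2.

Definition is_MP_inverse (a x : cl R) : Prop :=
  [/\ clmul (clmul a x) a = a,
      clmul (clmul x a) x = x,
      clprime (clmul a x) = clmul a x
    & clprime (clmul x a) = clmul x a].

End Cl12.

(* Main.v *)
Require Import Defs.
From HB Require Import structures.
From mathcomp Require Import all_boot all_order all_algebra.
From mathcomp Require Import ring lra.
Import Order.TTheory GRing.Theory Num.Theory.
Local Open Scope ring_scope.

Definition tabXl : seq (seq nat) := [:: [:: 0; 1; 2; 3; 4; 5; 6; 7]; [:: 1; 0; 3; 2; 5; 4; 7; 6]; [:: 2; 3; 0; 1; 6; 7; 4; 5]; [:: 3; 2; 1; 0; 7; 6; 5; 4]; [:: 4; 5; 6; 7; 0; 1; 2; 3]; [:: 5; 4; 7; 6; 1; 0; 3; 2]; [:: 6; 7; 4; 5; 2; 3; 0; 1]; [:: 7; 6; 5; 4; 3; 2; 1; 0]].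
Definition tabSl : seq (seq bool) := [:: [:: false; false; false; false; false; false; false; false]; [:: false; false; false; false; false; false; false; false]; [:: false; true; true; false; false; true; true; false]; [:: false; true; true; false; false; true; true; false]; [:: false; true; true; false; true; false; false; true]; [:: false; true; true; false; true; false; false; true]; [:: false; false; false; false; true; true; true; true]; [:: false; false; false; false; true; true; true; true]].
Definition tabX (s t : nat) : nat := nth 0%N (nth [::] tabXl s) t.
Definition tabSb (s t : nat) : bool := nth false (nth [::] tabSl s) t.

Lemma tabX_ok (s t : 'I_8) : xorn3 s t = tabX s t.
Proof.
case: s t => [[|[|[|[|[|[|[|[|s]]]]]]]] hs] [[|[|[|[|[|[|[|[|t]]]]]]]] ht] //=;
  by rewrite /xorn3 !big_ord_recr big_ord0.
Qed.

Lemma tabS_ok (s t : 'I_8) : odd (swapsn s t + negsqn s t) = tabSb s t.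
Proof.
case: s t => [[|[|[|[|[|[|[|[|s]]]]]]]] hs] [[|[|[|[|[|[|[|[|t]]]]]]]] ht] //=;
  by rewrite /swapsn /negsqn !big_ord_recr !big_ord0.
Qed.

Section S.
Variable R : realFieldType.

Definition mk8 (x0 x1 x2 x3 x4 x5 x6 x7 : R) : cl R :=
  [ffun i : 'I_8 => nth 0 [:: x0; x1; x2; x3; x4; x5; x6; x7] i].

Lemma clmul_mk8 (a0 a1 a2 a3 a4 a5 a6 a7 b0 b1 b2 b3 b4 b5 b6 b7 : R) :
  clmul (mk8 a0 a1 a2 a3 a4 a5 a6 a7) (mk8 b0 b1 b2 b3 b4 b5 b6 b7) =
  mk8 (a0 * b0 + a1 * b1 - a2 * b2 + a3 * b3 - a4 * b4 + a5 * b5 - a6 * b6 - a7 * b7)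
   (a0 * b1 + a1 * b0 + a2 * b3 - a3 * b2 + a4 * b5 - a5 * b4 - a6 * b7 - a7 * b6)
   (a0 * b2 + a1 * b3 + a2 * b0 - a3 * b1 + a4 * b6 - a5 * b7 - a6 * b4 - a7 * b5)
   (a0 * b3 + a1 * b2 - a2 * b1 + a3 * b0 - a4 * b7 + a5 * b6 - a6 * b5 - a7 * b4)
   (a0 * b4 + a1 * b5 - a2 * b6 + a3 * b7 + a4 * b0 - a5 * b1 + a6 * b2 + a7 * b3)
   (a0 * b5 + a1 * b4 + a2 * b7 - a3 * b6 - a4 * b1 + a5 * b0 + a6 * b3 + a7 * b2)
   (a0 * b6 + a1 * b7 + a2 * b4 - a3 * b5 - a4 * b2 + a5 * b3 + a6 * b0 + a7 * b1)
   (a0 * b7 + a1 * b6 - a2 * b5 + a3 * b4 + a4 * b3 - a5 * b2 + a6 * b1 + a7 * b0).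
Proof.
apply/ffunP => k; rewrite !ffunE.
rewrite (eq_bigr (fun s : 'I_8 => \sum_(t < 8) (if tabX s t == k then
   (if tabSb s t then -1 else 1) * mk8 a0 a1 a2 a3 a4 a5 a6 a7 s * mk8 b0 b1 b2 b3 b4 b5 b6 b7 t else 0))); last first.
  move=> s _; apply: eq_bigr => t _; rewrite tabX_ok -tabS_ok -signr_odd.
  by case: (odd _); rewrite ?expr0 ?expr1.
rewrite !big_ord_recl !big_ord0 !ffunE /=.
case: k => [[|[|[|[|[|[|[|[|k]]]]]]]] hk] //=; ring.
Qed.

Lemma mk8_eq (x0 x1 x2 x3 x4 x5 x6 x7 y0 y1 y2 y3 y4 y5 y6 y7 : R) :
  x0 = y0 -> x1 = y1 -> x2 = y2 -> x3 = y3 -> x4 = y4 -> x5 = y5 -> x6 = y6 -> x7 = y7 ->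
  mk8 x0 x1 x2 x3 x4 x5 x6 x7 = mk8 y0 y1 y2 y3 y4 y5 y6 y7.
Proof. by move=> -> -> -> -> -> -> -> ->. Qed.

Ltac cas8 i := case: i => [[|[|[|[|[|[|[|[|?]]]]]]]] ?] //=.

Lemma mk8_eta (a : cl R) : a = mk8 (clc a 0) (clc a 1) (clc a 2) (clc a 3)
   (clc a 4) (clc a 5) (clc a 6) (clc a 7).
Proof.
apply/ffunP => i; rewrite ffunE /clc; cas8 i; congr (a _); apply: val_inj; by rewrite /= inordK.
Qed.

Lemma clc_mk8 (x0 x1 x2 x3 x4 x5 x6 x7 : R) k : (k < 8)%N ->
  clc (mk8 x0 x1 x2 x3 x4 x5 x6 x7) k = nth 0 [:: x0; x1; x2; x3; x4; x5; x6; x7] k.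
Proof. by move=> hk; rewrite /clc ffunE inordK. Qed.

Lemma clzero_mk8 : clzero R = mk8 0 0 0 0 0 0 0 0.
Proof. by apply/ffunP => i; rewrite !ffunE; cas8 i. Qed.

Lemma ebase0_mk8 : ebase R 0 = mk8 1 0 0 0 0 0 0 0.
Proof. by apply/ffunP => i; rewrite !ffunE; cas8 i. Qed.

Lemma ebase7_mk8 : ebase R 7 = mk8 0 0 0 0 0 0 0 1.
Proof. by apply/ffunP => i; rewrite !ffunE; cas8 i. Qed.

Lemma clscale_mk8 k (x0 x1 x2 x3 x4 x5 x6 x7 : R) :
  clscale k (mk8 x0 x1 x2 x3 x4 x5 x6 x7) = mk8 (k * x0) (k * x1) (k * x2) (k * x3) (k * x4) (k * x5) (k * x6) (k * x7).
Proof. by apply/ffunP => i; rewrite !ffunE; cas8 i. Qed.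

Lemma clopp_mk8 (x0 x1 x2 x3 x4 x5 x6 x7 : R) :
  clopp (mk8 x0 x1 x2 x3 x4 x5 x6 x7) = mk8 (- x0) (- x1) (- x2) (- x3) (- x4) (- x5) (- x6) (- x7).
Proof. by apply/ffunP => i; rewrite !ffunE; cas8 i. Qed.

Lemma cladd_mk8 (x0 x1 x2 x3 x4 x5 x6 x7 y0 y1 y2 y3 y4 y5 y6 y7 : R) :
  cladd (mk8 x0 x1 x2 x3 x4 x5 x6 x7) (mk8 y0 y1 y2 y3 y4 y5 y6 y7) =
  mk8 (x0 + y0) (x1 + y1) (x2 + y2) (x3 + y3) (x4 + y4) (x5 + y5) (x6 + y6) (x7 + y7).
Proof. by apply/ffunP => i; rewrite !ffunE; cas8 i. Qed.

Lemma clbar_mk8 (x0 x1 x2 x3 x4 x5 x6 x7 : R) :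
  clbar (mk8 x0 x1 x2 x3 x4 x5 x6 x7) = mk8 (1 * x0) (-1 * x1) (-1 * x2) (-1 * x3) (-1 * x4) (-1 * x5) (-1 * x6) (1 * x7).
Proof. by apply/ffunP => i; rewrite !ffunE; cas8 i. Qed.

Lemma clprime_mk8 (x0 x1 x2 x3 x4 x5 x6 x7 : R) :
  clprime (mk8 x0 x1 x2 x3 x4 x5 x6 x7) = mk8 (1 * x0) (1 * x1) (-1 * x2) (1 * x3) (-1 * x4) (1 * x5) (-1 * x6) (-1 * x7).
Proof. by apply/ffunP => i; rewrite !ffunE; cas8 i. Qed.

Lemma clmul1l (b : cl R) : clmul (mk8 1 0 0 0 0 0 0 0) b = b.
Proof.
rewrite [b]mk8_eta clmul_mk8.
apply: mk8_eq; ring.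
Qed.

Lemma clmul1r (b : cl R) : clmul b (mk8 1 0 0 0 0 0 0 0) = b.
Proof.
rewrite [b]mk8_eta clmul_mk8.
apply: mk8_eq; ring.
Qed.

Lemma main (a0 a1 a2 a3 a4 a5 a6 a7 : R) (a := mk8 a0 a1 a2 a3 a4 a5 a6 a7) :
  [/\ a = clzero R -> is_MP_inverse a (clzero R),
      clP a != 0 ->
        is_MP_inverse a
          (clmul (clscale (clP a)^-1
                    (cladd (clscale (clN a) (ebase R 0))
                           (clopp (clscale (2 * clT a) (ebase R 7)))))
                 (clbar a))
    & a != clzero R -> clP a = 0 ->
        is_MP_inverse a
          (clscale (4 * (clc a 0 ^+ 2 + clc a 2 ^+ 2 + clc a 4 ^+ 2
                         + clc a 6 ^+ 2))^-1 (clprime a))].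
Proof.
rewrite /clP /clN /clT /a !clc_mk8 //=.
split.
- move=> ->; rewrite clzero_mk8 /is_MP_inverse !clmul_mk8 clprime_mk8.
  split; apply: mk8_eq; ring.
- move=> hP.
  set X := clmul _ _.
  have [hAX hXA] : (clmul (mk8 a0 a1 a2 a3 a4 a5 a6 a7) X = mk8 1 0 0 0 0 0 0 0) /\
                   (clmul X (mk8 a0 a1 a2 a3 a4 a5 a6 a7) = mk8 1 0 0 0 0 0 0 0).
    rewrite /X ebase0_mk8 ebase7_mk8 !clscale_mk8 clopp_mk8 cladd_mk8 clscale_mk8 clbar_mk8.
    by split; rewrite !clmul_mk8; apply: mk8_eq; field.
  rewrite /is_MP_inverse hAX hXA !clmul1l clprime_mk8.
  by split => //; apply: mk8_eq; ring.
- move=> hA hP.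
  have [hN hT] : (a0 ^+ 2 - a1 ^+ 2 + a2 ^+ 2 - a3 ^+ 2 + a4 ^+ 2 - a5 ^+ 2 + a6 ^+ 2 - a7 ^+ 2) = 0 /\ (a0 * a7 + a2 * a5 - a1 * a6 - a3 * a4) = 0.
    move: hP; set n := (a0 ^+ 2 - a1 ^+ 2 + a2 ^+ 2 - a3 ^+ 2 + a4 ^+ 2 - a5 ^+ 2 + a6 ^+ 2 - a7 ^+ 2); set t := (a0 * a7 + a2 * a5 - a1 * a6 - a3 * a4) => hP.
    have := sqr_ge0 n; have := sqr_ge0 t => ht hn.
    have e1 : n ^+ 2 = 0 by lra.
    have e2 : t ^+ 2 = 0 by lra.
    by split; apply/eqP; rewrite -sqrf_eq0; apply/eqP.
  have hs0 : a0 ^+ 2 + a2 ^+ 2 + a4 ^+ 2 + a6 ^+ 2 != 0.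
    apply/negP => /eqP h0; move: hA.
    have := sqr_ge0 a0; have := sqr_ge0 a1; have := sqr_ge0 a2; have := sqr_ge0 a3.
    have := sqr_ge0 a4; have := sqr_ge0 a5; have := sqr_ge0 a6; have := sqr_ge0 a7.
    move=> q7 q6 q5 q4 q3 q2 q1 q0.
    have e : a0 ^+ 2 = 0 by lra. move/eqP: e; rewrite sqrf_eq0 => /eqP ->.
    have e : a1 ^+ 2 = 0 by lra. move/eqP: e; rewrite sqrf_eq0 => /eqP ->.
    have e : a2 ^+ 2 = 0 by lra. move/eqP: e; rewrite sqrf_eq0 => /eqP ->.
    have e : a3 ^+ 2 = 0 by lra. move/eqP: e; rewrite sqrf_eq0 => /eqP ->.
    have e : a4 ^+ 2 = 0 by lra. move/eqP: e; rewrite sqrf_eq0 => /eqP ->.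
    have e : a5 ^+ 2 = 0 by lra. move/eqP: e; rewrite sqrf_eq0 => /eqP ->.
    have e : a6 ^+ 2 = 0 by lra. move/eqP: e; rewrite sqrf_eq0 => /eqP ->.
    have e : a7 ^+ 2 = 0 by lra. move/eqP: e; rewrite sqrf_eq0 => /eqP ->.
    by rewrite clzero_mk8 eqxx.
  rewrite /is_MP_inverse clprime_mk8 clscale_mk8 !clmul_mk8 !clprime_mk8.
  split.
  + apply: mk8_eq; [ (apply/eqP; rewrite -subr_eq0; apply/eqP; transitivity ((4 * (a0 ^+ 2 + a2 ^+ 2 + a4 ^+ 2 + a6 ^+ 2))^-1 * ((-3%:R * a0) * (a0 ^+ 2 - a1 ^+ 2 + a2 ^+ 2 - a3 ^+ 2 + a4 ^+ 2 - a5 ^+ 2 + a6 ^+ 2 - a7 ^+ 2) + (-2%:R * a7) * (a0 * a7 + a2 * a5 - a1 * a6 - a3 * a4))); [field; by [] | by rewrite hN hT; ring])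
   | (apply/eqP; rewrite -subr_eq0; apply/eqP; transitivity ((4 * (a0 ^+ 2 + a2 ^+ 2 + a4 ^+ 2 + a6 ^+ 2))^-1 * ((-1%:R * a1) * (a0 ^+ 2 - a1 ^+ 2 + a2 ^+ 2 - a3 ^+ 2 + a4 ^+ 2 - a5 ^+ 2 + a6 ^+ 2 - a7 ^+ 2) + (2%:R * a6) * (a0 * a7 + a2 * a5 - a1 * a6 - a3 * a4))); [field; by [] | by rewrite hN hT; ring])
   | (apply/eqP; rewrite -subr_eq0; apply/eqP; transitivity ((4 * (a0 ^+ 2 + a2 ^+ 2 + a4 ^+ 2 + a6 ^+ 2))^-1 * ((-3%:R * a2) * (a0 ^+ 2 - a1 ^+ 2 + a2 ^+ 2 - a3 ^+ 2 + a4 ^+ 2 - a5 ^+ 2 + a6 ^+ 2 - a7 ^+ 2) + (-2%:R * a5) * (a0 * a7 + a2 * a5 - a1 * a6 - a3 * a4))); [field; by [] | by rewrite hN hT; ring])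
   | (apply/eqP; rewrite -subr_eq0; apply/eqP; transitivity ((4 * (a0 ^+ 2 + a2 ^+ 2 + a4 ^+ 2 + a6 ^+ 2))^-1 * ((-1%:R * a3) * (a0 ^+ 2 - a1 ^+ 2 + a2 ^+ 2 - a3 ^+ 2 + a4 ^+ 2 - a5 ^+ 2 + a6 ^+ 2 - a7 ^+ 2) + (2%:R * a4) * (a0 * a7 + a2 * a5 - a1 * a6 - a3 * a4))); [field; by [] | by rewrite hN hT; ring])
   | (apply/eqP; rewrite -subr_eq0; apply/eqP; transitivity ((4 * (a0 ^+ 2 + a2 ^+ 2 + a4 ^+ 2 + a6 ^+ 2))^-1 * ((-3%:R * a4) * (a0 ^+ 2 - a1 ^+ 2 + a2 ^+ 2 - a3 ^+ 2 + a4 ^+ 2 - a5 ^+ 2 + a6 ^+ 2 - a7 ^+ 2) + (2%:R * a3) * (a0 * a7 + a2 * a5 - a1 * a6 - a3 * a4))); [field; by [] | by rewrite hN hT; ring])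
   | (apply/eqP; rewrite -subr_eq0; apply/eqP; transitivity ((4 * (a0 ^+ 2 + a2 ^+ 2 + a4 ^+ 2 + a6 ^+ 2))^-1 * ((-1%:R * a5) * (a0 ^+ 2 - a1 ^+ 2 + a2 ^+ 2 - a3 ^+ 2 + a4 ^+ 2 - a5 ^+ 2 + a6 ^+ 2 - a7 ^+ 2) + (-2%:R * a2) * (a0 * a7 + a2 * a5 - a1 * a6 - a3 * a4))); [field; by [] | by rewrite hN hT; ring])
   | (apply/eqP; rewrite -subr_eq0; apply/eqP; transitivity ((4 * (a0 ^+ 2 + a2 ^+ 2 + a4 ^+ 2 + a6 ^+ 2))^-1 * ((-3%:R * a6) * (a0 ^+ 2 - a1 ^+ 2 + a2 ^+ 2 - a3 ^+ 2 + a4 ^+ 2 - a5 ^+ 2 + a6 ^+ 2 - a7 ^+ 2) + (2%:R * a1) * (a0 * a7 + a2 * a5 - a1 * a6 - a3 * a4))); [field; by [] | by rewrite hN hT; ring])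
   | (apply/eqP; rewrite -subr_eq0; apply/eqP; transitivity ((4 * (a0 ^+ 2 + a2 ^+ 2 + a4 ^+ 2 + a6 ^+ 2))^-1 * ((-1%:R * a7) * (a0 ^+ 2 - a1 ^+ 2 + a2 ^+ 2 - a3 ^+ 2 + a4 ^+ 2 - a5 ^+ 2 + a6 ^+ 2 - a7 ^+ 2) + (-2%:R * a0) * (a0 * a7 + a2 * a5 - a1 * a6 - a3 * a4))); [field; by [] | by rewrite hN hT; ring]) ].
  + apply: mk8_eq; [ (apply/eqP; rewrite -subr_eq0; apply/eqP; transitivity ((4 * (a0 ^+ 2 + a2 ^+ 2 + a4 ^+ 2 + a6 ^+ 2))^-1 * (4 * (a0 ^+ 2 + a2 ^+ 2 + a4 ^+ 2 + a6 ^+ 2))^-1 * ((-3%:R * a0) * (a0 ^+ 2 - a1 ^+ 2 + a2 ^+ 2 - a3 ^+ 2 + a4 ^+ 2 - a5 ^+ 2 + a6 ^+ 2 - a7 ^+ 2) + (-2%:R * a7) * (a0 * a7 + a2 * a5 - a1 * a6 - a3 * a4))); [field; by [] | by rewrite hN hT; ring])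
   | (apply/eqP; rewrite -subr_eq0; apply/eqP; transitivity ((4 * (a0 ^+ 2 + a2 ^+ 2 + a4 ^+ 2 + a6 ^+ 2))^-1 * (4 * (a0 ^+ 2 + a2 ^+ 2 + a4 ^+ 2 + a6 ^+ 2))^-1 * ((-1%:R * a1) * (a0 ^+ 2 - a1 ^+ 2 + a2 ^+ 2 - a3 ^+ 2 + a4 ^+ 2 - a5 ^+ 2 + a6 ^+ 2 - a7 ^+ 2) + (2%:R * a6) * (a0 * a7 + a2 * a5 - a1 * a6 - a3 * a4))); [field; by [] | by rewrite hN hT; ring])
   | (apply/eqP; rewrite -subr_eq0; apply/eqP; transitivity ((4 * (a0 ^+ 2 + a2 ^+ 2 + a4 ^+ 2 + a6 ^+ 2))^-1 * (4 * (a0 ^+ 2 + a2 ^+ 2 + a4 ^+ 2 + a6 ^+ 2))^-1 * ((3%:R * a2) * (a0 ^+ 2 - a1 ^+ 2 + a2 ^+ 2 - a3 ^+ 2 + a4 ^+ 2 - a5 ^+ 2 + a6 ^+ 2 - a7 ^+ 2) + (2%:R * a5) * (a0 * a7 + a2 * a5 - a1 * a6 - a3 * a4))); [field; by [] | by rewrite hN hT; ring])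
   | (apply/eqP; rewrite -subr_eq0; apply/eqP; transitivity ((4 * (a0 ^+ 2 + a2 ^+ 2 + a4 ^+ 2 + a6 ^+ 2))^-1 * (4 * (a0 ^+ 2 + a2 ^+ 2 + a4 ^+ 2 + a6 ^+ 2))^-1 * ((-1%:R * a3) * (a0 ^+ 2 - a1 ^+ 2 + a2 ^+ 2 - a3 ^+ 2 + a4 ^+ 2 - a5 ^+ 2 + a6 ^+ 2 - a7 ^+ 2) + (2%:R * a4) * (a0 * a7 + a2 * a5 - a1 * a6 - a3 * a4))); [field; by [] | by rewrite hN hT; ring])
   | (apply/eqP; rewrite -subr_eq0; apply/eqP; transitivity ((4 * (a0 ^+ 2 + a2 ^+ 2 + a4 ^+ 2 + a6 ^+ 2))^-1 * (4 * (a0 ^+ 2 + a2 ^+ 2 + a4 ^+ 2 + a6 ^+ 2))^-1 * ((3%:R * a4) * (a0 ^+ 2 - a1 ^+ 2 + a2 ^+ 2 - a3 ^+ 2 + a4 ^+ 2 - a5 ^+ 2 + a6 ^+ 2 - a7 ^+ 2) + (-2%:R * a3) * (a0 * a7 + a2 * a5 - a1 * a6 - a3 * a4))); [field; by [] | by rewrite hN hT; ring])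
   | (apply/eqP; rewrite -subr_eq0; apply/eqP; transitivity ((4 * (a0 ^+ 2 + a2 ^+ 2 + a4 ^+ 2 + a6 ^+ 2))^-1 * (4 * (a0 ^+ 2 + a2 ^+ 2 + a4 ^+ 2 + a6 ^+ 2))^-1 * ((-1%:R * a5) * (a0 ^+ 2 - a1 ^+ 2 + a2 ^+ 2 - a3 ^+ 2 + a4 ^+ 2 - a5 ^+ 2 + a6 ^+ 2 - a7 ^+ 2) + (-2%:R * a2) * (a0 * a7 + a2 * a5 - a1 * a6 - a3 * a4))); [field; by [] | by rewrite hN hT; ring])
   | (apply/eqP; rewrite -subr_eq0; apply/eqP; transitivity ((4 * (a0 ^+ 2 + a2 ^+ 2 + a4 ^+ 2 + a6 ^+ 2))^-1 * (4 * (a0 ^+ 2 + a2 ^+ 2 + a4 ^+ 2 + a6 ^+ 2))^-1 * ((3%:R * a6) * (a0 ^+ 2 - a1 ^+ 2 + a2 ^+ 2 - a3 ^+ 2 + a4 ^+ 2 - a5 ^+ 2 + a6 ^+ 2 - a7 ^+ 2) + (-2%:R * a1) * (a0 * a7 + a2 * a5 - a1 * a6 - a3 * a4))); [field; by [] | by rewrite hN hT; ring])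
   | (apply/eqP; rewrite -subr_eq0; apply/eqP; transitivity ((4 * (a0 ^+ 2 + a2 ^+ 2 + a4 ^+ 2 + a6 ^+ 2))^-1 * (4 * (a0 ^+ 2 + a2 ^+ 2 + a4 ^+ 2 + a6 ^+ 2))^-1 * ((1%:R * a7) * (a0 ^+ 2 - a1 ^+ 2 + a2 ^+ 2 - a3 ^+ 2 + a4 ^+ 2 - a5 ^+ 2 + a6 ^+ 2 - a7 ^+ 2) + (2%:R * a0) * (a0 * a7 + a2 * a5 - a1 * a6 - a3 * a4))); [field; by [] | by rewrite hN hT; ring]) ].
  + by apply: mk8_eq; field.
  + by apply: mk8_eq; field.
Qed.
End S.

Theorem theorem3p1 (R : realFieldType) (a : cl R) :
  [/\ a = clzero R -> is_MP_inverse a (clzero R),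
      clP a != 0 ->
        is_MP_inverse a
          (clmul (clscale (clP a)^-1
                    (cladd (clscale (clN a) (ebase R 0))
                           (clopp (clscale (2 * clT a) (ebase R 7)))))
                 (clbar a))
    & a != clzero R -> clP a = 0 ->
        is_MP_inverse a
          (clscale (4 * (clc a 0 ^+ 2 + clc a 2 ^+ 2 + clc a 4 ^+ 2
                         + clc a 6 ^+ 2))^-1 (clprime a))].
Proof.
rewrite [a]mk8_eta; exact: main.
Qed.
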